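(* Let $F:(0,\infty)\to(0,\infty)$ be strictly decreasing and let $(x_n)_{n\in\mathbb Z}$ be an equilibrium configuration for $F$. Let $k\le m$ be integers and $S=\{k,k+1,\dots,m\}$. For $i\in S$ let $$G_i=\sum_{j\in S,\,j<i}F(x_i-x_j)-\sum_{j\in S,\,j>i}F(x_j-x_i)$$ be the signed force (positive meaning to the right) exerted on the particle at $x_i$ by the particles of $S$ only. Then $G_k\le G_{k+1}\le\dots\le G_m$.
   Context: A configuration is a strictly increasing bi-infinite sequence $(x_n)_{n\in\mathbb Z}$ of reals. The particle at $x_n$ is in equilibrium if $\sum_{m<n}F(x_n-x_m)$ and $\sum_{m>n}F(x_m-x_n)$ are both finite and equal. An equilibrium configuration is one in which every particle is in equilibrium. *)

(* Defs.v *)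
From Stdlib Require Import Reals ZArith List.
Open Scope R_scope.

Definition configuration (x : Z -> R) : Prop :=
  forall n m : Z, (n < m)%Z -> x n < x m.

Definition left_terms (F : R -> R) (x : Z -> R) (n : Z) (k : nat) : R :=
  F (x n - x (n - Z.of_nat (S k))%Z).

Definition right_terms (F : R -> R) (x : Z -> R) (n : Z) (k : nat) : R :=
  F (x (n + Z.of_nat (S k))%Z - x n).

Definition in_equilibrium (F : R -> R) (x : Z -> R) (n : Z) : Prop :=
  exists l : R, infinite_sum (left_terms F x n) l /\ infinite_sum (right_terms F x n) l.

Definition equilibrium_configuration (F : R -> R) (x : Z -> R) : Prop :=
  configuration x /\ forall n : Z, in_equilibrium F x n.

(* The integers k, k+1, ..., m (empty if m < k). *)
Definition zrange (k m : Z) : list Z :=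
  map (fun t => (k + Z.of_nat t)%Z) (seq 0 (Z.to_nat (m - k + 1))).

Definition G (F : R -> R) (x : Z -> R) (k m i : Z) : R :=
  fold_right Rplus 0
    (map (fun j => if Z.ltb j i then F (x i - x j) else 0) (zrange k m))
  - fold_right Rplus 0
    (map (fun j => if Z.ltb i j then F (x j - x i) else 0) (zrange k m)).

(* Main.v *)
Require Import Defs.
From Stdlib Require Import Reals ZArith List Lia Lra.
Open Scope R_scope.

Definition sumL (f : Z -> R) (l : list Z) : R := fold_right Rplus 0 (map f l).

Lemma sumL_app f l1 l2 : sumL f (l1 ++ l2) = sumL f l1 + sumL f l2.
Proof. induction l1; unfold sumL in *; simpl; [lra|rewrite IHl1; lra]. Qed.

Lemma sumL_le f g l : (forall j, In j l -> f j <= g j) -> sumL f l <= sumL g l.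
Proof.
  induction l; intros H; unfold sumL in *; simpl; [lra|].
  assert (f a <= g a) by (apply H; now left).
  assert (fold_right Rplus 0 (map f l) <= fold_right Rplus 0 (map g l))
    by (apply IHl; intros; apply H; now right). lra.
Qed.

Lemma sumL_zero f l : (forall j, In j l -> f j = 0) -> sumL f l = 0.
Proof.
  induction l; intros H; unfold sumL in *; simpl; [lra|].
  rewrite H by now left. rewrite IHl by (intros; apply H; now right). lra.
Qed.

Lemma sumL_minus f g l : sumL (fun j => f j - g j) l = sumL f l - sumL g l.
Proof. induction l; unfold sumL in *; simpl; [lra|rewrite IHl; lra]. Qed.

Lemma shift_map b : forall a A, map (fun t => (A + Z.of_nat t)%Z) (seq a b)
  = map (fun t => ((A + Z.of_nat a) + Z.of_nat t)%Z) (seq 0 b).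
Proof.
  induction b; intros a A; simpl; auto.
  f_equal; [lia|]. rewrite IHb. rewrite (IHb 1%nat (A + Z.of_nat a)%Z).
  apply map_ext; intros; lia.
Qed.

Lemma zrange_split A B C : (A - 1 <= B)%Z -> (B <= C)%Z ->
  zrange A C = zrange A B ++ zrange (B + 1) C.
Proof.
  intros. unfold zrange.
  replace (Z.to_nat (C - A + 1)) with (Z.to_nat (B - A + 1) + Z.to_nat (C - (B+1) + 1))%nat by lia.
  rewrite seq_app, map_app. f_equal. rewrite shift_map. simpl.
  apply map_ext; intros; lia.
Qed.

Lemma zrange_single a : zrange a a = (a :: nil).
Proof. unfold zrange. replace (a - a + 1)%Z with 1%Z by lia. simpl. f_equal; lia. Qed.

Lemma in_zrange a b j : In j (zrange a b) -> (a <= j <= b)%Z.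
Proof. unfold zrange; intros H. apply in_map_iff in H as [t [<- Ht]].
  apply in_seq in Ht. lia. Qed.

Section S.
Variable F : R -> R.
Variable x : Z -> R.
Definition Lt c j := if Z.ltb j c then F (x c - x j) else 0.
Definition Rt c j := if Z.ltb c j then F (x j - x c) else 0.

Lemma left_core c n : sumL (Lt c) (zrange (c - Z.of_nat (S n)) (c - 1))
   = sum_f_R0 (left_terms F x c) n.
Proof.
  induction n.
  - replace (c - Z.of_nat 1)%Z with (c - 1)%Z by lia. rewrite zrange_single.
    unfold sumL, Lt, left_terms; cbn [map fold_right sum_f_R0].
    rewrite (proj2 (Z.ltb_lt _ _)) by lia.
    replace (c - Z.of_nat 1)%Z with (c - 1)%Z by lia. lra.
  - rewrite (zrange_split _ (c - Z.of_nat (S (S n))) _) by lia.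
    rewrite sumL_app, zrange_single.
    replace (c - Z.of_nat (S (S n)) + 1)%Z with (c - Z.of_nat (S n))%Z by lia.
    rewrite IHn. simpl sum_f_R0. unfold sumL, Lt, left_terms; cbn [map fold_right].
    rewrite (proj2 (Z.ltb_lt _ _)) by lia. lra.
Qed.

Lemma left_full c n B : (c - 1 <= B)%Z ->
  sumL (Lt c) (zrange (c - Z.of_nat (S n)) B) = sum_f_R0 (left_terms F x c) n.
Proof.
  intros HB. rewrite (zrange_split _ (c-1) _) by lia. rewrite sumL_app, left_core.
  rewrite sumL_zero; [lra|]. intros j Hj. apply in_zrange in Hj. unfold Lt.
  replace (j <? c)%Z with false by (symmetry; apply Z.ltb_ge; lia). reflexivity.
Qed.

Lemma right_core c n : sumL (Rt c) (zrange (c + 1) (c + Z.of_nat (S n)))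
   = sum_f_R0 (right_terms F x c) n.
Proof.
  induction n.
  - replace (c + Z.of_nat 1)%Z with (c + 1)%Z by lia. rewrite zrange_single.
    unfold sumL, Rt, right_terms; cbn [map fold_right sum_f_R0].
    rewrite (proj2 (Z.ltb_lt _ _)) by lia.
    replace (c + Z.of_nat 1)%Z with (c + 1)%Z by lia. lra.
  - rewrite (zrange_split _ (c + Z.of_nat (S n)) _) by lia.
    rewrite sumL_app, IHn.
    replace (c + Z.of_nat (S n) + 1)%Z with (c + Z.of_nat (S (S n)))%Z by lia.
    rewrite zrange_single. simpl sum_f_R0. unfold sumL, Rt, right_terms; cbn [map fold_right].
    rewrite (proj2 (Z.ltb_lt _ _)) by lia. lra.
Qed.

Lemma right_full c n A : (A <= c + 1)%Z ->
  sumL (Rt c) (zrange A (c + Z.of_nat (S n))) = sum_f_R0 (right_terms F x c) n.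
Proof.
  intros HA. rewrite (zrange_split _ c _) by lia. rewrite sumL_app, right_core.
  rewrite sumL_zero; [lra|]. intros j Hj. apply in_zrange in Hj. unfold Rt.
  replace (c <? j)%Z with false by (symmetry; apply Z.ltb_ge; lia). reflexivity.
Qed.
End S.

Lemma cv_shift u l : Un_cv u l -> Un_cv (fun n => u (S n)) l.
Proof. intros H e He. destruct (H e He) as [N HN]. exists N. intros n Hn. apply HN. lia. Qed.

Lemma ge0_of_lim c u M : Un_cv u 0 -> (forall N, (N >= M)%nat -> u N <= c) -> 0 <= c.
Proof.
  intros Hu Hc. destruct (Rle_or_lt 0 c) as [|Hlt]; auto.
  destruct (Hu (- c)) as [N HN]; [lra|].
  specialize (HN (N + M)%nat ltac:(lia)). specialize (Hc (N + M)%nat ltac:(lia)).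
  unfold Rdist in HN. rewrite Rminus_0_r in HN.
  pose proof (Rle_abs (- u (N+M)%nat)). rewrite Rabs_Ropp in H. lra.
Qed.

Theorem mainTheorem6 (F : R -> R)
  (Fpos : forall t : R, 0 < t -> 0 < F t)
  (Fdec : forall s t : R, 0 < s -> s < t -> F t < F s)
  (x : Z -> R) (Heq : equilibrium_configuration F x)
  (k m : Z) (Hkm : (k <= m)%Z) :
  forall i : Z, (k <= i)%Z -> (i < m)%Z -> G F x k m i <= G F x k m (i + 1).
Proof.
  intros i Hki Him. destruct Heq as [Hconf Heqn].
  destruct (Heqn i) as [l1 [HL1 HR1]]. destruct (Heqn (i+1)%Z) as [l2 [HL2 HR2]].
  set (A := fun N : nat => (i - Z.of_nat (S N))%Z).
  set (B := fun N : nat => (i + Z.of_nat (S (S N)))%Z).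
  set (D := fun c N => sumL (Lt F x c) (zrange (A N) (B N)) - sumL (Rt F x c) (zrange (A N) (B N))).
  assert (HGc : forall c, G F x k m c = sumL (fun j => Lt F x c j - Rt F x c j) (zrange k m)).
  { intros c. rewrite sumL_minus. reflexivity. }
  apply (Rplus_le_reg_r (- G F x k m i)). rewrite Rplus_opp_r.
  apply (ge0_of_lim _ (fun N => D (i+1)%Z N - D i N) (Z.to_nat (i - k) + Z.to_nat (m - i))).
  - replace 0 with ((l2 - l2) - (l1 - l1)) by lra. apply CV_minus.
    + unfold D. eapply Un_cv_ext.
      2:{ apply CV_minus. apply (cv_shift (fun n => sum_f_R0 (left_terms F x (i+1)) n)). exact HL2. exact HR2. }
      intros N. simpl. unfold A, B.
      replace (i - Z.of_nat (S N))%Z with ((i+1) - Z.of_nat (S (S N)))%Z by lia.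
      replace (i + Z.of_nat (S (S N)))%Z with ((i+1) + Z.of_nat (S N))%Z by lia.
      rewrite left_full by lia. rewrite right_full by lia. reflexivity.
    + unfold D. eapply Un_cv_ext.
      2:{ apply CV_minus. exact HL1. apply (cv_shift (fun n => sum_f_R0 (right_terms F x i) n)). exact HR1. }
      intros N. simpl. unfold A, B.
      rewrite left_full by lia. rewrite right_full by lia. reflexivity.
  - intros N HN. unfold D.
    rewrite <- (sumL_minus (Lt F x (i+1))), <- (sumL_minus (Lt F x i)).
    rewrite (zrange_split (A N) (k-1) (B N)) by (unfold A, B; lia).
    replace (k - 1 + 1)%Z with k by lia.
    rewrite (zrange_split k m (B N)) by (unfold A, B; lia).
    rewrite !sumL_app. rewrite !HGc.
    assert (H1 : sumL (fun j => Lt F x (i+1) j - Rt F x (i+1) j) (zrange (A N) (k-1))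
              <= sumL (fun j => Lt F x i j - Rt F x i j) (zrange (A N) (k-1))).
    { apply sumL_le. intros j Hj. apply in_zrange in Hj. unfold Lt, Rt.
      replace (j <? i+1)%Z with true by (symmetry; apply Z.ltb_lt; lia).
      replace (j <? i)%Z with true by (symmetry; apply Z.ltb_lt; lia).
      replace (i+1 <? j)%Z with false by (symmetry; apply Z.ltb_ge; lia).
      replace (i <? j)%Z with false by (symmetry; apply Z.ltb_ge; lia).
      assert (x j < x i) by (apply Hconf; lia).
      assert (x i < x (i+1)%Z) by (apply Hconf; lia).
      pose proof (Fdec (x i - x j) (x (i+1)%Z - x j) ltac:(lra) ltac:(lra)). lra. }
    assert (H2 : sumL (fun j => Lt F x (i+1) j - Rt F x (i+1) j) (zrange (m+1) (B N))
              <= sumL (fun j => Lt F x i j - Rt F x i j) (zrange (m+1) (B N))).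
    { apply sumL_le. intros j Hj. apply in_zrange in Hj. unfold Lt, Rt.
      replace (j <? i+1)%Z with false by (symmetry; apply Z.ltb_ge; lia).
      replace (j <? i)%Z with false by (symmetry; apply Z.ltb_ge; lia).
      replace (i+1 <? j)%Z with true by (symmetry; apply Z.ltb_lt; lia).
      replace (i <? j)%Z with true by (symmetry; apply Z.ltb_lt; lia).
      assert (x (i+1)%Z < x j) by (apply Hconf; lia).
      assert (x i < x (i+1)%Z) by (apply Hconf; lia).
      pose proof (Fdec (x j - x (i+1)%Z) (x j - x i) ltac:(lra) ltac:(lra)). lra. }
    lra.
Qed.
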